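(* Let $\Pi$ be a set of primes containing at least two distinct primes, and let $\tau>2$ be a real number. Then the set $W^*_\tau(\Pi)$ contains uncountably many Liouville numbers.
   Context: For a set $\Pi$ of primes, let $Q(\Pi)$ be the set of positive integers divisible by no prime in $\Pi$. When $\Pi$ is finite, $Q(\Pi)$ is the set of positive integers coprime to $\prod_{\pi\in\Pi}\pi$. $W^*_\tau(\Pi)$ is the set of real $x$ satisfying both of the following: \begin{itemize} \item there are infinitely many integers $q\ge1$ with $q\notin Q(\Pi)$ for which some integer $p$ satisfies $|x-p/q|<q^{-\tau}$; \item there are only finitely many $q\in Q(\Pi)$ for which some integer $p$ satisfies $|x-p/q|<q^{-\tau}$. \end{itemize} A Liouville number is an irrational real $x$ such that for every $k>0$ there exist integers $p$ and $q\ge2$ with $0<|x-p/q|<q^{-k}$. *)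

(* Defs.v *)
From Stdlib Require Import Reals ZArith Znumtheory.
Open Scope R_scope.

Definition approx (tau x : R) (q : Z) : Prop :=
  exists p : Z, Rabs (x - IZR p / IZR q) < Rpower (IZR q) (- tau).

Definition inQ (Pi : Z -> Prop) (q : Z) : Prop :=
  (1 <= q)%Z /\ forall p : Z, Pi p -> ~ (p | q)%Z.

Definition Wstar (tau : R) (Pi : Z -> Prop) (x : R) : Prop :=
  (forall N : Z, exists q : Z, (N < q)%Z /\ (1 <= q)%Z /\ ~ inQ Pi q /\ approx tau x q) /\
  (exists N : Z, forall q : Z, inQ Pi q -> approx tau x q -> (q <= N)%Z).

Definition irrational (x : R) : Prop :=
  forall p q : Z, q <> 0%Z -> x <> IZR p / IZR q.

Definition Liouville (x : R) : Prop :=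
  irrational x /\
  forall k : R, 0 < k ->
    exists p q : Z, (2 <= q)%Z /\
      0 < Rabs (x - IZR p / IZR q) /\ Rabs (x - IZR p / IZR q) < Rpower (IZR q) (- k).

Definition uncountable (S : R -> Prop) : Prop :=
  ~ exists f : nat -> R, forall x, S x -> exists n, f n = x.

(* Main.v *)
Require Import Defs.
From Stdlib Require Import Reals ZArith Znumtheory.
Open Scope R_scope.
From Coquelicot Require Import Coquelicot.
From Stdlib Require Import Reals ZArith Znumtheory Lia Lra ClassicalEpsilon.
Open Scope R_scope.

Fixpoint aa (M:nat) (b:nat->bool) (k:nat) : nat :=
  match k with O => 1%nat | S k => ((k+M)*aa M b k + 1 + (if b k then 1 else 0))%nat end.

Lemma aa_ge1 M b k : (1 <= aa M b k)%nat.
Proof. destruct k; simpl; lia. Qed.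

Lemma aa_S M b k : (aa M b (S k) >= (k+M)*aa M b k + 1)%nat.
Proof. simpl; destruct (b k); lia. Qed.

Lemma aa_ge M b k : (2 <= M)%nat -> (k + 1 <= aa M b k)%nat.
Proof. intro HM. induction k. simpl; lia. pose proof (aa_S M b k). nia. Qed.

Definition Dz (p:Z) M b k : Z := (p ^ Z.of_nat (aa M b k))%Z.
Fixpoint NN (p:Z) M b k : Z :=
  match k with O => 1%Z | S k => (NN p M b k * p ^ Z.of_nat (aa M b (S k) - aa M b k) + 1)%Z end.
Definition tt (p:Z) M b (j:nat) : R := (/ IZR p) ^ (aa M b j).
Definition Ss p M b k := sum_f_R0 (tt p M b) k.

Lemma Ss_repr p M b k : (2 <= p)%Z -> (2<=M)%nat -> Ss p M b k = IZR (NN p M b k) / IZR (Dz p M b k).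
Proof.
  intros Hp HM. assert (HP: 0 < IZR p) by (apply IZR_lt; lia).
  unfold Dz. rewrite <- pow_IZR.
  induction k.
  - simpl. unfold Ss, tt; simpl. field. lra.
  - unfold Ss in *. simpl sum_f_R0. rewrite IHk. simpl NN.
    rewrite plus_IZR, mult_IZR, <- pow_IZR.
    unfold tt.
    pose proof (aa_S M b k).
    set (u := aa M b k) in *. set (v := aa M b (S k)) in *.
    assert (u <= v)%nat by nia. replace v with (u + (v - u))%nat at 2 3 by lia.
    replace ((k + M) * u + 1 + (if b k then 1%nat else 0%nat))%nat with v by reflexivity.
    replace (IZR p ^ v) with (IZR p ^ u * IZR p ^ (v - u)).
    2:{ rewrite <- pow_add. f_equal. lia. }
    rewrite pow_inv. replace v with (u + (v-u))%nat at 1 by lia. rewrite pow_add.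
    field. split; apply pow_nonzero; lra.
Qed.

Lemma aa_lt M b k : (2<=M)%nat -> (aa M b k < aa M b (S k))%nat.
Proof. intros. pose proof (aa_S M b k). pose proof (aa_ge1 M b k). nia. Qed.

Lemma aa_mono M b i j : (2<=M)%nat -> (i < j)%nat -> (aa M b i < aa M b j)%nat.
Proof. intros HM H. induction H. apply aa_lt; auto. pose proof (aa_lt M b m HM). lia. Qed.

Lemma pow_half r n m : 0 < r <= /2 -> (n < m)%nat -> 2 * r ^ m <= r ^ n.
Proof.
  intros Hr H. replace m with (n + S (m - n - 1))%nat by lia. rewrite pow_add.
  assert (forall k, r ^ S k <= r) as Hk.
  { induction k. simpl; lra. simpl in *. assert (0 <= r ^ k) by (apply pow_le; lra). nra. }
  pose proof (Hk (m-n-1)%nat). assert (0 < r ^ n) by (apply pow_lt; lra). nra.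
Qed.

Lemma rr_bound p : (2 <= p)%Z -> 0 < / IZR p <= /2.
Proof. intros. assert (2 <= IZR p) by (apply IZR_le; lia). split. apply Rinv_0_lt_compat; lra.
  apply Rinv_le_contravar; lra. Qed.

Lemma tt_pos p M b j : (2<=p)%Z -> 0 < tt p M b j.
Proof. intros. unfold tt. apply pow_lt. apply rr_bound; auto. Qed.

Lemma tt_half p M b i j : (2<=p)%Z -> (2<=M)%nat -> (i < j)%nat -> 2 * tt p M b j <= tt p M b i.
Proof. intros. unfold tt. apply pow_half. apply rr_bound; auto. apply aa_mono; auto. Qed.

Lemma tail_up p M b k n : (2<=p)%Z -> (2<=M)%nat ->
  Ss p M b (k+1+n) - Ss p M b k + tt p M b (k+1+n) <= 2 * tt p M b (S k).
Proof.
  intros Hp HM. induction n.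
  - replace (k+1+0)%nat with (S k) by lia. unfold Ss; simpl. lra.
  - replace (k+1+S n)%nat with (S (k+1+n)) by lia. unfold Ss in *; simpl sum_f_R0.
    pose proof (tt_half p M b (k+1+n) (S (k+1+n)) Hp HM ltac:(lia)). lra.
Qed.

Lemma tail_lo p M b k n : (2<=p)%Z ->
  tt p M b (S k) <= Ss p M b (k+1+n) - Ss p M b k.
Proof.
  intros Hp. induction n.
  - replace (k+1+0)%nat with (S k) by lia. unfold Ss; simpl. lra.
  - replace (k+1+S n)%nat with (S (k+1+n)) by lia. unfold Ss in *; simpl sum_f_R0.
    pose proof (tt_pos p M b (S (k+1+n)) Hp). lra.
Qed.

Definition xv p M b := real (Lim_seq (Ss p M b)).

Lemma xv_lim p M b : (2<=p)%Z -> (2<=M)%nat -> is_lim_seq (Ss p M b) (xv p M b).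
Proof.
  intros Hp HM.
  assert (ex_finite_lim_seq (Ss p M b)) as [l Hl].
  { apply ex_finite_lim_seq_incr with (M := Ss p M b 0 + 2 * tt p M b 1).
    - intro n. unfold Ss; simpl. pose proof (tt_pos p M b (S n) Hp). lra.
    - intro n. destruct n. pose proof (tt_pos p M b 1 Hp). lra.
      pose proof (tail_up p M b 0 n Hp HM). pose proof (tt_pos p M b (0+1+n) Hp).
      replace (S n) with (0+1+n)%nat by lia. lra. }
  unfold xv. rewrite (is_lim_seq_unique _ _ Hl). simpl. exact Hl.
Qed.

Lemma tail p M b k : (2<=p)%Z -> (2<=M)%nat ->
  tt p M b (S k) <= xv p M b - Ss p M b k <= 2 * tt p M b (S k).
Proof.
  intros Hp HM.
  assert (is_lim_seq (fun n => Ss p M b (n + (k+1)) - Ss p M b k) (xv p M b - Ss p M b k)) as HL.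
  { apply is_lim_seq_minus'. apply (is_lim_seq_incr_n (Ss p M b) (k+1) (xv p M b)). apply xv_lim; auto.
    apply is_lim_seq_const. }
  split.
  - assert (forall n, tt p M b (S k) <= Ss p M b (n + (k+1)) - Ss p M b k) as B.
    { intro n. replace (n + (k+1))%nat with (k+1+n)%nat by lia; apply tail_lo; auto. }
    exact (is_lim_seq_le _ _ _ _ B (is_lim_seq_const _) HL).
  - assert (forall n, Ss p M b (n + (k+1)) - Ss p M b k <= 2 * tt p M b (S k)) as B.
    { intro n. replace (n + (k+1))%nat with (k+1+n)%nat by lia.
      pose proof (tail_up p M b k n Hp HM); pose proof (tt_pos p M b (k+1+n) Hp); lra. }
    exact (is_lim_seq_le _ _ _ _ B HL (is_lim_seq_const _)).
Qed.

Lemma NN_mod p M b k : (2<=M)%nat -> exists m, NN p M b k = (m * p + 1)%Z.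
Proof.
  intros HM. destruct k. exists 0%Z. simpl. lia.
  change (NN p M b (S k)) with (NN p M b k * p ^ Z.of_nat (aa M b (S k) - aa M b k) + 1)%Z. pose proof (aa_lt M b k HM).
  set (e := (aa M b (S k) - aa M b k)%nat).
  assert (Z.of_nat e = Z.succ (Z.of_nat (e - 1))) by lia.
  exists (NN p M b k * p ^ Z.of_nat (e-1))%Z. rewrite H0, Z.pow_succ_r by lia. ring.
Qed.

Lemma not_eq_S p M b k P Q : prime p -> (2<=M)%nat -> ~ (p | Q)%Z -> (Q <> 0)%Z ->
  IZR P / IZR Q <> Ss p M b k.
Proof.
  intros Hpr HM HQ HQ0 E. pose proof (prime_ge_2 _ Hpr) as Hp.
  rewrite Ss_repr in E by auto.
  assert (HD : (0 < Dz p M b k)%Z) by (unfold Dz; apply Z.pow_pos_nonneg; lia).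
  assert (P * Dz p M b k = NN p M b k * Q)%Z as E2.
  { apply eq_IZR. rewrite !mult_IZR. assert (IZR Q <> 0) by (apply not_0_IZR; auto).
    assert (IZR (Dz p M b k) <> 0) by (apply not_0_IZR; lia).
    apply (f_equal (fun t => t * IZR Q * IZR (Dz p M b k))) in E. field_simplify in E; auto. lra. }
  assert (p | Dz p M b k)%Z as Hd.
  { unfold Dz. pose proof (aa_ge1 M b k). replace (Z.of_nat (aa M b k)) with (Z.succ (Z.of_nat (aa M b k - 1))) by lia.
    rewrite Z.pow_succ_r by lia. exists (p ^ Z.of_nat (aa M b k - 1))%Z. ring. }
  assert (p | NN p M b k * Q)%Z as H1. { rewrite <- E2. apply Z.divide_mul_r. auto. }
  destruct (prime_mult p Hpr _ _ H1) as [H2|H2]; [|contradiction].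
  destruct (NN_mod p M b k HM) as [m Hm]. rewrite Hm in H2.
  assert (p | 1)%Z. { apply (Z.divide_add_cancel_r _ (m*p)%Z); auto. apply Z.divide_mul_r. apply Z.divide_refl. }
  apply Z.divide_1_r in H. lia.
Qed.

Lemma dist_S p M b k P Q : (2<=p)%Z -> (2<=M)%nat -> (Q <> 0)%Z -> IZR P / IZR Q <> Ss p M b k ->
  / (Rabs (IZR Q) * IZR (Dz p M b k)) <= Rabs (IZR P / IZR Q - Ss p M b k).
Proof.
  intros Hp HM HQ0 Hne. rewrite Ss_repr in * by auto.
  assert (HD : (0 < Dz p M b k)%Z) by (unfold Dz; apply Z.pow_pos_nonneg; lia).
  assert (HDr : 0 < IZR (Dz p M b k)) by (apply IZR_lt; auto).
  assert (HQr : IZR Q <> 0) by (apply not_0_IZR; auto).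
  set (z := (P * Dz p M b k - NN p M b k * Q)%Z).
  assert (IZR P / IZR Q - IZR (NN p M b k) / IZR (Dz p M b k) = IZR z / (IZR Q * IZR (Dz p M b k))) as E.
  { unfold z. rewrite minus_IZR, !mult_IZR. field. lra. }
  assert (z <> 0%Z) as Hz.
  { intro Hz. apply Hne. assert (IZR z = 0) by (rewrite Hz; auto). rewrite H in E.
    unfold Rdiv at 3 in E. rewrite Rmult_0_l in E. lra. }
  rewrite E. unfold Rdiv. rewrite Rabs_mult, Rabs_inv, Rabs_mult, (Rabs_right (IZR (Dz _ _ _ _))) by lra.
  assert (1 <= Rabs (IZR z)). { rewrite <- abs_IZR. apply IZR_le. lia. }
  assert (0 < Rabs (IZR Q)) by (apply Rabs_pos_lt; auto).
  assert (0 < / (Rabs (IZR Q) * IZR (Dz p M b k))) by (apply Rinv_0_lt_compat; nra).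
  nra.
Qed.

Definition AA p M b k := INR (aa M b k) * ln (IZR p).

Lemma lp_ge p : (2<=p)%Z -> 0 < ln 2 <= ln (IZR p).
Proof. intros. assert (2 <= IZR p) by (apply IZR_le; lia). split.
  rewrite <- ln_1. apply ln_increasing; lra. apply ln_le; lra. Qed.

Lemma Dz_exp p M b k : (2<=p)%Z -> IZR (Dz p M b k) = exp (AA p M b k).
Proof. intros. assert (0 < IZR p) by (apply IZR_lt; lia). unfold Dz, AA. rewrite <- pow_IZR.
  rewrite <- ln_pow by auto. rewrite exp_ln; auto. apply pow_lt; auto. Qed.

Lemma tt_exp p M b k : (2<=p)%Z -> tt p M b k = exp (- AA p M b k).
Proof. intros. unfold tt. rewrite pow_inv. rewrite pow_IZR. fold (Dz p M b k). rewrite Dz_exp by auto.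
  rewrite exp_Ropp. auto. Qed.

Lemma Rpower_Dz p M b k K : (2<=p)%Z -> Rpower (IZR (Dz p M b k)) (- K) = exp (- K * AA p M b k).
Proof. intros. unfold Rpower. rewrite Dz_exp, ln_exp by auto. f_equal; ring. Qed.

Lemma AA_pos p M b k : (2<=p)%Z -> ln (IZR p) <= AA p M b k.
Proof. intros. pose proof (lp_ge p H). unfold AA. pose proof (aa_ge1 M b k).
  apply le_INR in H1. simpl in H1. nra. Qed.

Lemma AA_S p M b k : (2<=p)%Z -> AA p M b (S k) >= (INR k + INR M) * AA p M b k + ln (IZR p).
Proof. intros. pose proof (lp_ge p H). unfold AA. pose proof (aa_S M b k).
  apply le_INR in H1. rewrite plus_INR, mult_INR, plus_INR, INR_1 in H1. nra. Qed.

Lemma AA_ge p M b k : (2<=p)%Z -> (2<=M)%nat -> AA p M b k >= (INR k + 1) * ln (IZR p).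
Proof. intros. pose proof (lp_ge p H). unfold AA. pose proof (aa_ge M b k H0).
  apply le_INR in H2. rewrite plus_INR in H2. simpl in H2. nra. Qed.

Lemma two_tt p M b k : (2<=p)%Z -> 2 * tt p M b k = exp (ln 2 - AA p M b k).
Proof. intros. rewrite tt_exp by auto. unfold Rminus. rewrite exp_plus, exp_ln; lra. Qed.

Lemma Dz_ge p M b k : (2<=p)%Z -> (p <= Dz p M b k)%Z.
Proof. intros. unfold Dz. pose proof (aa_ge1 M b k).
  replace (Z.of_nat (aa M b k)) with (Z.succ (Z.of_nat (aa M b k - 1))) by lia.
  rewrite Z.pow_succ_r by lia. assert (0 < p ^ Z.of_nat (aa M b k - 1))%Z by (apply Z.pow_pos_nonneg; lia). nia. Qed.

Lemma xv_gt p M b k : (2<=p)%Z -> (2<=M)%nat -> Ss p M b k < xv p M b.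
Proof. intros. pose proof (tail p M b k H H0). pose proof (tt_pos p M b (S k) H). lra. Qed.

Lemma liouv p M b : (2<=p)%Z -> (2<=M)%nat -> Liouville (xv p M b).
Proof.
  intros Hp HM. pose proof (lp_ge p Hp) as Hl. split.
  - intros P Q HQ E.
    assert (0 < Rabs (IZR Q)) by (apply Rabs_pos_lt, not_0_IZR; auto).
    assert (forall k, INR k * ln (IZR p) <= ln 2 + ln (Rabs (IZR Q))) as Hb.
    { intro k. assert (IZR P / IZR Q <> Ss p M b k) as Hne.
      { rewrite <- E. pose proof (xv_gt p M b k Hp HM). lra. }
      pose proof (dist_S p M b k P Q Hp HM HQ Hne) as D.
      rewrite <- E in D. pose proof (tail p M b k Hp HM) as T.
      pose proof (tt_pos p M b (S k) Hp). rewrite (Rabs_right (xv p M b - Ss p M b k)) in D by lra.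
      rewrite two_tt in T by auto. rewrite Dz_exp in D by auto.
      assert (0 < exp (AA p M b k)) by apply exp_pos.
      assert (ln (/ (Rabs (IZR Q) * exp (AA p M b k))) <= ln 2 - AA p M b (S k)) as L.
      { rewrite <- (ln_exp (ln 2 - _)). apply ln_le. apply Rinv_0_lt_compat; nra. lra. }
      rewrite ln_Rinv, ln_mult, ln_exp in L by nra.
      pose proof (AA_S p M b k Hp). pose proof (AA_ge p M b k Hp HM). pose proof (AA_pos p M b k Hp).
      assert (2 <= INR M) by (apply (le_INR 2); auto). simpl in *.
      assert (0 <= (INR k + INR M - 2) * AA p M b k). { apply Rmult_le_pos. pose proof (pos_INR k); lra. lra. }
      nra. }
    destruct (INR_archimed (ln (IZR p)) (ln 2 + ln (Rabs (IZR Q)))) as [n Hn]. lra.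
    specialize (Hb n). lra.
  - intros K HK. destruct (INR_archimed 1 K) as [k Hk]. lra.
    exists (NN p M b k), (Dz p M b k). split. pose proof (Dz_ge p M b k Hp). lia.
    rewrite <- Ss_repr by auto. pose proof (tail p M b k Hp HM) as T. pose proof (tt_pos p M b (S k) Hp).
    rewrite Rabs_right by lra. split. lra.
    rewrite Rpower_Dz by auto. eapply Rle_lt_trans. apply T. rewrite two_tt by auto.
    apply exp_increasing.
    pose proof (AA_S p M b k Hp). pose proof (AA_pos p M b k Hp).
    assert (2 <= INR M) by (apply (le_INR 2); auto). simpl in *. nra.
Qed.

Lemma wstar1 p M b (Pi : Z -> Prop) tau : prime p -> Pi p -> (2<=M)%nat -> INR M > tau + 1 -> 2 < tau ->
  forall N : Z, exists q : Z, (N < q)%Z /\ (1 <= q)%Z /\ ~ inQ Pi q /\ approx tau (xv p M b) q.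
Proof.
  intros Hpr HPi HM HMt Ht N. pose proof (prime_ge_2 _ Hpr) as Hp. pose proof (lp_ge p Hp) as Hl.
  set (k := Z.to_nat N). exists (Dz p M b k). split; [|split; [|split]].
  - unfold Dz. pose proof (aa_ge M b k HM). pose proof (Z.pow_gt_lin_r p (Z.of_nat (aa M b k)) ltac:(lia) ltac:(lia)). lia.
  - pose proof (Dz_ge p M b k Hp). lia.
  - intros [_ H]. apply (H p HPi). unfold Dz. pose proof (aa_ge1 M b k).
    replace (Z.of_nat (aa M b k)) with (Z.succ (Z.of_nat (aa M b k - 1))) by lia.
    rewrite Z.pow_succ_r by lia. exists (p ^ Z.of_nat (aa M b k - 1))%Z. ring.
  - exists (NN p M b k). rewrite <- Ss_repr by auto. pose proof (tail p M b k Hp HM) as T.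
    pose proof (tt_pos p M b (S k) Hp). rewrite Rabs_right by lra.
    rewrite Rpower_Dz by auto. eapply Rle_lt_trans. apply T. rewrite two_tt by auto.
    apply exp_increasing.
    pose proof (AA_S p M b k Hp). pose proof (AA_pos p M b k Hp). pose proof (pos_INR k).
    assert (0 <= INR k * AA p M b k) by nra. nra.
Qed.

Lemma arith_core m tau L l2 y z : 2 < tau -> 2 <= m -> m * (tau - 2) > 2 * (tau - 1) -> 0 < l2 -> 0 < L ->
  L * (tau - 2) > 6 * l2 -> y < 2 * l2 + L + z -> m * z <= y -> y > (tau - 1) * L - l2 -> False.
Proof.
  intros. assert ((m - 1) * y < m * (2 * l2 + L)) by nra.
  assert ((m-1) * y > (m - 1) * ((tau - 1) * L - l2)) by nra.
  assert (L * ((m-1)*(tau-1) - m) < 3 * m * l2) by nra.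
  assert ((m-1)*(tau-1) - m > m * (tau - 2) / 2) by nra.
  assert (L * (m * (tau - 2) / 2) < 3 * m * l2) by nra.
  nra.
Qed.

Lemma wstar2 p M b (Pi : Z -> Prop) tau : prime p -> Pi p -> (2<=M)%nat -> INR M * (tau - 2) > 2 * (tau - 1) -> 2 < tau ->
  exists N : Z, forall q : Z, inQ Pi q -> approx tau (xv p M b) q -> (q <= N)%Z.
Proof.
  intros Hpr HPi HM HMt Ht. pose proof (prime_ge_2 _ Hpr) as Hp. pose proof (lp_ge p Hp) as Hl.
  set (lp := ln (IZR p)) in *.
  set (L0 := (lp + ln 2) / (tau - 1) + 6 * ln 2 / (tau - 2)).
  exists (up (exp L0)). intros q [Hq1 HqP] [P HP].
  destruct (Z_le_gt_dec q (up (exp L0))) as [|Hgt]; auto. exfalso.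
  destruct (archimed (exp L0)) as [Ha _].
  assert (Hgt' : IZR (up (exp L0)) < IZR q) by (apply IZR_lt; lia).
  set (L := ln (IZR q)).
  assert (HL0 : L0 < L). { unfold L. rewrite <- (ln_exp L0). apply ln_increasing. apply exp_pos. lra. }
  assert (Hqr : 0 < IZR q) by (apply IZR_lt; lia).
  assert (HqL : IZR q = exp L) by (unfold L; rewrite exp_ln; auto).
  assert (HA : 0 <= 6 * ln 2 / (tau - 2)) by (apply Rmult_le_pos; [|apply Rlt_le, Rinv_0_lt_compat]; lra).
  assert (HB : 0 < (lp + ln 2) / (tau - 1)) by (apply Rmult_lt_0_compat; [|apply Rinv_0_lt_compat]; lra).
  assert (HL1 : L * (tau - 1) > lp + ln 2).
  { assert (L > (lp + ln 2) / (tau - 1)) by (unfold L0 in HL0; lra).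
    apply (Rmult_gt_compat_r (tau - 1)) in H; [|lra]. unfold Rdiv in H. rewrite Rmult_assoc, Rinv_l in H; lra. }
  assert (HL2 : L * (tau - 2) > 6 * ln 2).
  { assert (L > 6 * ln 2 / (tau - 2)) by (unfold L0 in HL0; lra).
    apply (Rmult_gt_compat_r (tau - 2)) in H; [|lra]. unfold Rdiv in H. rewrite Rmult_assoc, Rinv_l in H; lra. }
  assert (HLpos : 0 < L) by nra.
  unfold Rpower in HP. fold L in HP.
  assert (forall k, AA p M b k <= (tau - 1) * L - ln 2) as Hall.
  { induction k.
    - unfold AA. simpl aa. rewrite INR_1. fold lp. nra.
    - assert (Hne : IZR P / IZR q <> Ss p M b k).
      { apply not_eq_S; auto. lia. }
      pose proof (dist_S p M b k P q Hp HM ltac:(lia) Hne) as D.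
      rewrite Rabs_right in D by lra. rewrite Dz_exp in D by auto. replace (IZR q * exp (AA p M b k)) with (exp L * exp (AA p M b k)) in D by (rewrite HqL; auto).
      rewrite <- exp_plus, <- exp_Ropp in D.
      pose proof (tail p M b k Hp HM) as T. pose proof (tt_pos p M b (S k) Hp).
      rewrite two_tt in T by auto.
      assert (Rabs (IZR P / IZR q - Ss p M b k) <= Rabs (xv p M b - IZR P / IZR q) + Rabs (xv p M b - Ss p M b k)) as Tr.
      { unfold Rabs. repeat destruct Rcase_abs; lra. }
      rewrite (Rabs_right (xv p M b - Ss p M b k)) in Tr by lra.
      assert (exp (- (L + AA p M b k)) < exp (- tau * L) + exp (ln 2 - AA p M b (S k))) as E1 by lra.
      assert (exp (ln 2 + - tau * L) <= exp (- (L + AA p M b k))) as E2.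
      { destruct (Req_dec (ln 2 + - tau * L) (- (L + AA p M b k))) as [e|e]. rewrite e; lra.
        apply Rlt_le, exp_increasing. lra. }
      rewrite exp_plus, exp_ln in E2 by lra.
      assert (exp (- (L + AA p M b k)) < exp (ln 2 + (ln 2 - AA p M b (S k)))) as E3.
      { rewrite exp_plus, exp_ln by lra. lra. }
      apply exp_lt_inv in E3.
      destruct (Rle_or_lt (AA p M b (S k)) ((tau - 1) * L - ln 2)) as [|Hc]; auto. exfalso.
      pose proof (AA_S p M b k Hp) as X1. pose proof (pos_INR k). pose proof (AA_pos p M b k Hp) as X2. fold lp in X1, X2.
      assert (0 <= INR k * AA p M b k) by nra.
      assert (2 <= INR M) by (apply (le_INR 2); auto).
      apply (arith_core (INR M) tau L (ln 2) (AA p M b (S k)) (AA p M b k)); auto; lra. }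
  destruct (INR_archimed lp ((tau - 1) * L)) as [n Hn]. lra.
  specialize (Hall n). pose proof (AA_ge p M b n Hp HM) as X1. fold lp in X1. nra.
Qed.

Lemma prefix p M b b' k : (forall i, (i < k)%nat -> b i = b' i) ->
  aa M b k = aa M b' k /\ NN p M b k = NN p M b' k.
Proof.
  induction k; intros H. simpl; auto.
  destruct IHk as [E1 E2]. intros; apply H; lia.
  assert (E3 : aa M b (S k) = aa M b' (S k)).
  { simpl. rewrite E1, (H k) by lia. auto. }
  split; auto. change (NN p M b (S k)) with (NN p M b k * p ^ Z.of_nat (aa M b (S k) - aa M b k) + 1)%Z.
  change (NN p M b' (S k)) with (NN p M b' k * p ^ Z.of_nat (aa M b' (S k) - aa M b' k) + 1)%Z.
  rewrite E1, E2, E3. auto.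
Qed.

Lemma differ p M b b' k : (2<=p)%Z -> (2<=M)%nat -> (forall i, (i < k)%nat -> b i = b' i) ->
  b k = false -> b' k = true -> xv p M b' < xv p M b.
Proof.
  intros Hp HM H Hb Hb'. destruct (prefix p M b b' k H) as [E1 E2].
  assert (ES : Ss p M b k = Ss p M b' k) by (rewrite !Ss_repr by auto; unfold Dz; rewrite E1, E2; auto).
  assert (EA : aa M b' (S k) = S (aa M b (S k))) by (simpl; rewrite Hb, Hb', E1; lia).
  pose proof (tail p M b k Hp HM) as T1.
  pose proof (tail p M b' (S k) Hp HM) as T2.
  assert (Ss p M b' (S k) = Ss p M b' k + tt p M b' (S k)) by (unfold Ss; simpl; auto).
  set (r := / IZR p). pose proof (rr_bound p Hp) as Hr. fold r in Hr.
  set (A := aa M b (S k)).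
  assert (tt p M b (S k) = r ^ A) by auto.
  assert (tt p M b' (S k) = r ^ (S A)) by (unfold tt; rewrite EA; auto).
  assert (2 * tt p M b' (S (S k)) <= r ^ (S (S A))).
  { unfold tt. apply pow_half; auto. pose proof (aa_S M b' (S k)). pose proof (aa_ge1 M b' (S k)). rewrite EA in *. nia. }
  pose proof (pow_half r (S A) (S (S A)) Hr ltac:(lia)).
  pose proof (pow_half r A (S A) Hr ltac:(lia)).
  assert (0 < r ^ (S (S A))) by (apply pow_lt; lra).
  lra.
Qed.

Lemma xv_inj p M b b' : (2<=p)%Z -> (2<=M)%nat -> xv p M b = xv p M b' -> forall i, b i = b' i.
Proof.
  intros Hp HM E.
  assert (forall k i, (i < k)%nat -> b i = b' i) as K.
  { induction k. intros; lia. intros i Hi.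
    assert (b k = b' k).
    { destruct (b k) eqn:Hb, (b' k) eqn:Hb'; auto.
      - pose proof (differ p M b' b k Hp HM (fun i H => eq_sym (IHk i H)) Hb' Hb). lra.
      - pose proof (differ p M b b' k Hp HM IHk Hb Hb'). lra. }
    destruct (Nat.eq_dec i k). subst; auto. apply IHk; lia. }
  intro i. apply (K (S i)). lia.
Qed.

Theorem theorem2 (Pi : Z -> Prop)
  (Hprime : forall p : Z, Pi p -> prime p)
  (Htwo : exists p1 p2 : Z, Pi p1 /\ Pi p2 /\ p1 <> p2)
  (tau : R) (Htau : 2 < tau) :
  uncountable (fun x => Liouville x /\ Wstar tau Pi x).
Proof.
  destruct Htwo as [p [_ [HPi [_ _]]]]. pose proof (Hprime p HPi) as Hpr.
  pose proof (prime_ge_2 _ Hpr) as Hp.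
  destruct (INR_archimed 1 (tau + 1 + 2 * (tau - 1) / (tau - 2) + 2)) as [M HM0]. lra.
  assert (HA : 0 < 2 * (tau - 1) / (tau - 2)) by (apply Rmult_lt_0_compat; [|apply Rinv_0_lt_compat]; lra).
  assert (HM : (2 <= M)%nat). { destruct M as [|[|M]]; simpl in HM0; try lra. lia. }
  assert (HMt1 : INR M > tau + 1) by lra.
  assert (HMt2 : INR M * (tau - 2) > 2 * (tau - 1)).
  { assert (INR M > 2 * (tau - 1) / (tau - 2)) by lra.
    apply (Rmult_gt_compat_r (tau - 2)) in H; [|lra]. unfold Rdiv in H. rewrite Rmult_assoc, Rinv_l in H; lra. }
  assert (Good : forall b, Liouville (xv p M b) /\ Wstar tau Pi (xv p M b)).
  { intro b. split. apply liouv; auto. split. apply wstar1; auto. apply wstar2; auto. }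
  intros [f Hf].
  set (h := fun n => match excluded_middle_informative (exists b, xv p M b = f n) with
                     | left e => proj1_sig (constructive_indefinite_description _ e)
                     | right _ => fun _ : nat => true end).
  assert (Hh : forall n, (exists b, xv p M b = f n) -> xv p M (h n) = f n).
  { intros n e. unfold h. destruct (excluded_middle_informative _) as [e'|e'].
    - destruct (constructive_indefinite_description _ e'). simpl. auto.
    - contradiction. }
  set (d := fun i => negb (h i i)).
  destruct (Hf (xv p M d) (Good d)) as [n Hn].
  assert (xv p M (h n) = xv p M d) by (rewrite Hh; eauto).
  pose proof (xv_inj p M (h n) d Hp HM H n). unfold d in H0. destruct (h n n); discriminate.
Qed.
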